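(* Let $x,y$ be vertices of the Farey graph with $d_{\mathcal{C}}(x,y)\ge 2$, let $\mathcal{L}=\mathcal{L}(x,y)$ have type $(a_1,\dots,a_n)$ and pivot points $v_0=x,v_1,\dots,v_n,v_{n+1}=y$. Define the efficient path as follows: start at $v_0$; when at $v_i$ with $i\le n-1$, perform the move $p$ (to $v_{i+2}$) if $a_{i+1}=1$ and the move $t$ (to $v_{i+1}$) if $a_{i+1}\ge 2$; when at $v_n$, perform the move $t$; stop upon reaching $v_{n+1}$. Then the efficient path is a geodesic from $x$ to $y$ in $\mathcal{L}$ (equivalently, in $\mathcal{F}$).
   Context: The Farey graph $\mathcal{F}$ has vertex set $\mathbb{Q}\cup\{\infty\}$ (vertices $p/q$ in lowest terms, $\infty=1/0$), $p/q$ and $r/s$ adjacent iff $|ps-qr|=1$, with path metric $d_{\mathcal{C}}$ (unit edge lengths). It is embedded in $\overline{\mathbb{H}}=\mathbb{H}^2\cup\partial\mathbb{H}^2$ with edges realized as hyperbolic geodesics; closures of complementary regions are ideal triangles (Farey triangles). For vertices $x,y$ the ladder $\mathcal{L}(x,y)$ is the union of the Farey triangles whose interior meets the oriented hyperbolic geodesic $\gamma$ from $x$ to $y$, regarded as the subgraph formed by their vertices and edges. These triangles $T_1,\dots,T_N$ are crossed by $\gamma$ in order; $\gamma$ passes through exactly two sides of each $T_j$ (or, for $T_1$ and $T_N$, has an endpoint at a vertex and crosses the opposite side), and the pivot of $T_j$ is the vertex of $T_j$ common to the two sides of $T_j$ that are rungs (edges whose interior meets $\gamma$) — for $1<j<N$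 — while for $T_1$ and $T_N$ it is the vertex of the single rung side lying on the appropriate side so that maximal runs are well defined; equivalently, the type is defined as follows. Group $T_1,\dots,T_N$ into maximal runs of consecutive triangles all containing a common vertex $v$ not equal to $x$ or $y$ and with all of them incident to $v$ along rungs; if there are $n$ runs with lengths $a_1,\dots,a_n$ (in order along $\gamma$) and common vertices $v_1,\dots,v_n$, then $\mathcal{L}$ has type $(a_1,\dots,a_n)$ and pivot points $v_0=x,v_1,\dots,v_n,v_{n+1}=y$. Consecutive pivot points $v_i,v_{i+1}$ are adjacent, the pivots alternate between the two sides of $\gamma$, and the vertices of the $i$-th run other than $v_i$ form a path of exactly $a_i$ edges in $\mathcal{L}$ from $v_{i-1}$ to $v_{i+1}$. The move $t$ from $v_i$ is the one-edge step $v_i\to v_{i+1}$; the move $p$ from $v_i$ is the traversal $v_i\to v_{i+2}$ along this path of $a_{i+1}$ edges. The length of a path is its number of edges. *)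

(* Defs.v *)
From Stdlib Require Import ZArith List.
Import ListNotations.
Open Scope Z_scope.

(** Vertices p/q of the Farey graph are encoded by pairs (p,q) of integers in
    lowest terms with q > 0, and infinity = 1/0 is encoded as (1,0). *)
Definition V : Type := (Z * Z)%type.

Definition farey_vertex (v : V) : Prop :=
  Z.gcd (fst v) (snd v) = 1 /\ (0 < snd v \/ (snd v = 0 /\ fst v = 1)).

Definition infty : V := (1, 0).

Definition fdet (u w : V) : Z := fst u * snd w - snd u * fst w.

Definition farey_adj (u w : V) : Prop := Z.abs (fdet u w) = 1.

(** A path in the Farey graph from x to y, given as its list of vertices
    (consecutive vertices adjacent).  Its length (number of edges) is
    [length p - 1]. *)
Fixpoint adj_chain (p : list V) : Prop :=
  match p with
  | u :: ((w :: _) as p') => farey_adj u w /\ adj_chain p'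
  | _ => True
  end.

Definition farey_path (x y : V) (p : list V) : Prop :=
  p <> [] /\ hd x p = x /\ last p x = y /\
  Forall farey_vertex p /\ adj_chain p.

Definition path_length (p : list V) : nat := (length p - 1)%nat.

Definition farey_dist_le (x y : V) (n : nat) : Prop :=
  exists p, farey_path x y p /\ (path_length p <= n)%nat.

Definition farey_geodesic (x y : V) (p : list V) : Prop :=
  farey_path x y p /\
  forall q, farey_path x y q -> (path_length p <= path_length q)%nat.

(** The hyperbolic geodesic with endpoints a,b crosses (meets in its
    interior) the hyperbolic geodesic with endpoints x,y iff the pairs {a,b}
    and {x,y} are (distinct and) interleaved on the circle at infinity
    R ∪ {∞}, iff the cross ratio [x,y;a,b] is negative.  In homogeneous
    coordinates this is the sign condition below (invariant under rescaling
    each of the four vectors, and valid uniformly including ∞ = (1,0)). *)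
Definition separates (x y a b : V) : Prop :=
  fdet x a * fdet y b * fdet x b * fdet y a < 0.

(** An (unordered) edge {a,b}, stored as a pair. *)
Definition endpoint (z : V) (e : V * V) : Prop := z = fst e \/ z = snd e.

Definition same_edge (e f : V * V) : Prop := e = f \/ e = (snd f, fst f).

Definition rung (x y : V) (e : V * V) : Prop :=
  farey_vertex (fst e) /\ farey_vertex (snd e) /\
  farey_adj (fst e) (snd e) /\ separates x y (fst e) (snd e).

Definition e0 : V * V := (infty, infty).
Definition v0 : V := infty.

(** [E] is the list of all rungs of the ladder L(x,y), each listed once,
    in the order in which the oriented geodesic from x to y crosses them:
    E_i comes before E_j iff E_i separates x from the endpoints of E_j not on E_i. *)
Definition ladder_rungs (x y : V) (E : list (V * V)) : Prop :=
  E <> [] /\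
  (forall e, In e E -> rung x y e) /\
  (forall e, rung x y e -> exists f, In f E /\ same_edge e f) /\
  (forall i j, (i < j < length E)%nat ->
     ~ same_edge (nth i E e0) (nth j E e0) /\
     forall z, endpoint z (nth j E e0) -> ~ endpoint z (nth i E e0) ->
       separates x z (fst (nth i E e0)) (snd (nth i E e0))).

(** Ladder triangles: with E = [E_1; ...; E_M] (M = N-1), the triangles are
    T_1 = {x} ∪ E_1, T_{j+1} = E_j ∪ E_{j+1}, T_N = E_M ∪ {y}.
    [w] = [w_1; ...; w_N] lists the pivots of T_1, ..., T_N: for 1<j<N the
    vertex common to the two rungs E_{j-1}, E_j of T_j; for T_1 and T_N the
    pivot is that of the neighbouring triangle (w_1 = w_2, w_N = w_{N-1}), a
    vertex of the single rung (when N = 2 either endpoint of E_1). *)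
Definition ladder_pivots (E : list (V * V)) (w : list V) : Prop :=
  length w = S (length E) /\
  (forall k, (1 <= k)%nat -> (k + 1 < length w)%nat ->
     endpoint (nth k w v0) (nth (k - 1) E e0) /\ endpoint (nth k w v0) (nth k E e0)) /\
  nth 0 w v0 = nth 1 w v0 /\
  endpoint (nth 0 w v0) (nth 0 E e0) /\
  nth (length w - 1) w v0 = nth (length w - 2) w v0.

(** [w] splits into maximal runs of equal consecutive pivots, of lengths
    a = [a_1; ...; a_n] with common vertices v = [v_1; ...; v_n]. *)
Fixpoint consec_distinct (v : list V) : Prop :=
  match v with
  | u :: ((u' :: _) as v') => u <> u' /\ consec_distinct v'
  | _ => True
  end.

Definition runs_of (w : list V) (a : list nat) (v : list V) : Prop :=
  length a = length v /\
  Forall (fun k => (1 <= k)%nat) a /\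
  consec_distinct v /\
  w = concat (map (fun kv => repeat (snd kv) (fst kv)) (combine a v)).

Definition ladder_type (x y : V) (a : list nat) (v : list V) : Prop :=
  exists E w, ladder_rungs x y E /\ ladder_pivots E w /\ runs_of w a v.

(** [eff_go as vs]: the walker sits at pivot v_i, [as = [a_{i+1}; ...; a_n]]
    and [vs = [v_{i+1}; ...; v_{n+1}]]; it returns the pivots visited after
    v_i.
    Since p is only used when a_{i+1} = 1, each move is one edge. *)
Fixpoint eff_go (vs : list V) (as_ : list nat) {struct vs} : list V :=
  match as_, vs with
  | [], _ => vs
  | a :: as', v1 :: vs' =>
      if Nat.eqb a 1 then
        match vs' with
        | v2 :: vs'' => v2 :: eff_go vs'' (tl as')
        | [] => []
        end
      else v1 :: eff_go vs' as'
  | _ :: _, [] => []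
  end.

Definition efficient_path (x y : V) (a : list nat) (v : list V) : list V :=
  x :: eff_go (v ++ [y]) a.

(* Main.v *)
Require Import Defs.
From Stdlib Require Import ZArith List Lia.
Import ListNotations.
Open Scope Z_scope.

Lemma fdet_anti u w : fdet u w = - fdet w u.
Proof. destruct u, w; unfold fdet; simpl; ring. Qed.

Lemma fdet_self u : fdet u u = 0.
Proof. destruct u; unfold fdet; simpl; ring. Qed.

Lemma adj_sym u w : farey_adj u w -> farey_adj w u.
Proof. unfold farey_adj; rewrite fdet_anti, Z.abs_opp; auto. Qed.

Lemma sep_swap x y a b : separates x y a b -> separates x y b a.
Proof. unfold separates; intros; nia. Qed.

Lemma sep_swap2 x y a b : separates x y a b -> separates y x a b.
Proof. unfold separates; intros; nia. Qed.

Lemma fdet0_eq u w : farey_vertex u -> farey_vertex w -> fdet u w = 0 -> u = w.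
Proof.
  destruct u as [p q], w as [r s]; unfold farey_vertex, fdet; simpl.
  intros [Hg1 H1] [Hg2 H2] H.
  destruct H1 as [H1|[H1 H1']]; destruct H2 as [H2|[H2 H2']]; subst.
  - assert (Hqs : (q | s)).
    { apply (Z.gauss q p s). exists r. nia. rewrite Z.gcd_comm; auto. }
    assert (Hsq : (s | q)).
    { apply (Z.gauss s r q). exists p. nia. rewrite Z.gcd_comm; auto. }
    assert (q = s) by (apply Z.divide_antisym_nonneg; auto; lia).
    subst. f_equal. nia.
  - nia.
  - nia.
  - reflexivity.
Qed.

Lemma noncross p q a b : farey_adj p q -> farey_adj a b -> ~ separates p q a b.
Proof.
  unfold farey_adj, separates; intros H1 H2 H.
  assert (Pl : fdet p q * fdet a b = fdet p a * fdet q b - fdet p b * fdet q a)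
    by (destruct p, q, a, b; unfold fdet; simpl; ring).
  set (A := fdet p a) in *. set (B := fdet q b) in *. set (C := fdet p b) in *.
  set (D := fdet q a) in *.
  assert (Z.abs (fdet p q * fdet a b) = 1) by (rewrite Z.abs_mul; lia).
  rewrite Pl in H0.
  assert (A*B < 0 /\ C*D > 0 \/ A*B > 0 /\ C*D < 0) by nia.
  lia.
Qed.

Definition lin (k1:Z) (u:V) (k2:Z) (w:V) : V := (k1*fst u + k2*fst w, k1*snd u + k2*snd w).
Definition scale (e:Z) (u:V) : V := (e*fst u, e*snd u).
Definition cA (a b z : V) := fdet a b * fdet z b.
Definition cB (a b z : V) := fdet a b * fdet a z.

Lemma coords_gen a b z w : fdet z w * (fdet a b * fdet a b) * (fdet a b * fdet a b)
  = fdet a b * (cA a b z * cB a b w - cB a b z * cA a b w).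
Proof. destruct a, b, z, w; unfold cA, cB, fdet; simpl; ring. Qed.

Lemma sq1 D : Z.abs D = 1 -> D * D = 1.
Proof. intros; nia. Qed.

Lemma coords a b : Z.abs (fdet a b) = 1 -> forall z w,
  fdet z w = fdet a b * (cA a b z * cB a b w - cB a b z * cA a b w).
Proof. intros H z w. rewrite <- coords_gen. rewrite (sq1 _ H). ring. Qed.

Lemma cA_a a b : Z.abs (fdet a b) = 1 -> cA a b a = 1.
Proof. unfold cA; intros; apply sq1; auto. Qed.
Lemma cB_b a b : Z.abs (fdet a b) = 1 -> cB a b b = 1.
Proof. unfold cB; intros; apply sq1; auto. Qed.
Lemma cA_b a b : cA a b b = 0.
Proof. unfold cA; rewrite fdet_self; ring. Qed.
Lemma cB_a a b : cB a b a = 0.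
Proof. unfold cB; rewrite fdet_self; ring. Qed.
Lemma cA_lin a b k1 u k2 w : cA a b (lin k1 u k2 w) = k1 * cA a b u + k2 * cA a b w.
Proof. destruct a, b, u, w; unfold cA, lin, fdet; simpl; ring. Qed.
Lemma cB_lin a b k1 u k2 w : cB a b (lin k1 u k2 w) = k1 * cB a b u + k2 * cB a b w.
Proof. destruct a, b, u, w; unfold cB, lin, fdet; simpl; ring. Qed.
Lemma cA_scale a b e u : cA a b (scale e u) = e * cA a b u.
Proof. destruct a, b, u; unfold cA, scale, fdet; simpl; ring. Qed.
Lemma cB_scale a b e u : cB a b (scale e u) = e * cB a b u.
Proof. destruct a, b, u; unfold cB, scale, fdet; simpl; ring. Qed.

Lemma lin_coords a b z : Z.abs (fdet a b) = 1 -> z = lin (cA a b z) a (cB a b z) b.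
Proof.
  intros H. pose proof (sq1 _ H) as H2. destruct a as [a1 a2], b as [b1 b2], z as [z1 z2].
  unfold lin, cA, cB, fdet in *; simpl in *. f_equal.
  - rewrite <- (Z.mul_1_l z1) at 1; rewrite <- H2; ring.
  - rewrite <- (Z.mul_1_l z2) at 1; rewrite <- H2; ring.
Qed.

Lemma fdet_scale_l e u w : fdet (scale e u) w = e * fdet u w.
Proof. destruct u, w; unfold scale, fdet; simpl; ring. Qed.

Lemma primitive z k : farey_vertex z -> (k | fst z) -> (k | snd z) -> Z.abs k = 1.
Proof.
  intros [Hg _] H1 H2. apply Z.divide_1_r_abs. rewrite <- Hg.
  apply Z.gcd_greatest; auto.
Qed.

Lemma normalize c a : Z.abs (fdet c a) = 1 ->
  exists e, (e = 1 \/ e = -1) /\ farey_vertex (scale e c).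
Proof.
  intros H. destruct c as [p q], a as [r s]. unfold fdet in H; simpl in H.
  assert (Hg : Z.gcd p q = 1).
  { assert (Hd : (Z.gcd p q | p * s - q * r)).
    { apply Z.divide_sub_r; apply Z.divide_mul_l;
      [apply Z.gcd_divide_l | apply Z.gcd_divide_r]. }
    apply Z.divide_abs_r in Hd. rewrite H in Hd.
    apply Z.divide_1_r_nonneg; auto. apply Z.gcd_nonneg. }
  unfold farey_vertex, scale; simpl.
  destruct (Z.lt_trichotomy q 0) as [Hq|[Hq|Hq]].
  - exists (-1). split; [right; reflexivity|].
    replace (-1*p) with (-p) by ring. replace (-1*q) with (-q) by ring.
    rewrite Z.gcd_opp_l, Z.gcd_opp_r. split; auto; lia.
  - subst q. rewrite Z.gcd_0_r in Hg.
    destruct (Z.abs_spec p) as [[_ Hp]|[_ Hp]]; rewrite Hp in Hg.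
    + exists 1. split; [left; reflexivity|]. subst p. simpl. split; auto.
    + exists (-1). split; [right; reflexivity|]. assert (p = -1) by lia. subst p. simpl.
      split; auto.
  - exists 1. split; [left; reflexivity|]. rewrite !Z.mul_1_l. split; auto.
Qed.

Lemma prod4_nz p q r t : p*q*r*t < 0 -> p <> 0 /\ q <> 0 /\ r <> 0 /\ t <> 0.
Proof.
  intros H; repeat split; intro h; subst;
  rewrite ?Z.mul_0_l, ?Z.mul_0_r in H; lia.
Qed.

Lemma mul_nz p q : p <> 0 -> q <> 0 -> p * q <> 0.
Proof. intros; apply Z.neq_mul_0; auto. Qed.

Lemma sep_nz x y a b : separates x y a b ->
  fdet x a <> 0 /\ fdet y b <> 0 /\ fdet x b <> 0 /\ fdet y a <> 0.
Proof. apply prod4_nz. Qed.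

Lemma cAB_nz a b z : Z.abs (fdet a b) = 1 -> fdet z a <> 0 -> fdet z b <> 0 ->
  cA a b z * cB a b z <> 0.
Proof.
  intros H h1 h2. unfold cA, cB. rewrite (fdet_anti a z).
  assert (fdet a b <> 0) by lia.
  apply mul_nz; apply mul_nz; auto; lia.
Qed.

Lemma sgn_cases t : t <> 0 -> (Z.sgn t = 1 /\ t > 0) \/ (Z.sgn t = -1 /\ t < 0).
Proof.
  intros H. destruct (Z.lt_trichotomy t 0) as [h|[h|h]].
  - right; split; auto; apply Z.sgn_neg; auto.
  - lia.
  - left; split; [apply Z.sgn_pos; auto| lia].
Qed.

Lemma branch1 a b z w :
  farey_adj a b -> separates z w a b ->
  fdet z b * fdet z b > fdet z a * fdet z a ->
  exists c, farey_vertex c /\ farey_adj a c /\ farey_adj c b /\ c <> a /\ c <> b /\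
   ~ separates z c a b /\ separates z w a c /\ ~ separates w b a c.
Proof.
  intros Hab Hs Hgt.
  pose proof (coords a b Hab) as Hf.
  unfold farey_adj in Hab.
  set (D := fdet a b) in *.
  pose proof (cA_a a b Hab) as H1. pose proof (cB_b a b Hab) as H2.
  pose proof (cA_b a b) as H3. pose proof (cB_a a b) as H4.
  pose (s := Z.sgn (cA a b z * cB a b z)).
  assert (Hnz : cA a b z * cB a b z <> 0).
  { destruct (sep_nz _ _ _ _ Hs) as [? [? [? ?]]]. apply cAB_nz; auto. }
  assert (Hsc := sgn_cases _ Hnz). fold s in Hsc.
  set (c0 := lin 1 a s b).
  assert (Hc0 : Z.abs (fdet c0 a) = 1).
  { rewrite Hf. unfold c0. rewrite cA_lin, cB_lin, H1, H2, H3, H4.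
    rewrite Z.abs_mul, Hab. destruct Hsc as [[-> _]|[-> _]]; lia. }
  destruct (normalize c0 a Hc0) as [e [He Hc]].
  exists (scale e c0). split; [exact Hc|].
  assert (HcA : cA a b (scale e c0) = e)
    by (unfold c0; rewrite cA_scale, cA_lin, H1, H3; ring).
  assert (HcB : cB a b (scale e c0) = e * s)
    by (unfold c0; rewrite cB_scale, cB_lin, H2, H4; ring).
  assert (Hne : forall u v, u = v -> cA a b u = cA a b v /\ cB a b u = cB a b v)
    by (intros; subst; auto).
  unfold farey_adj, separates in *.
  repeat match goal with |- context[fdet ?u ?v] => rewrite (Hf u v) end.
  repeat match goal with H : context[fdet ?u ?v] |- _ =>
    match H with Hf => fail 1 | _ => rewrite (Hf u v) in H end end. rewrite ?HcA, ?HcB, ?H1, ?H2, ?H3, ?H4 in *.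
  clear Hf.
  set (az := cA a b z) in *. set (bz := cB a b z) in *.
  set (aw := cA a b w) in *. set (bw := cB a b w) in *.
  clearbody s az bz aw bw D.
  assert (HD : D = 1 \/ D = -1) by lia.
  repeat split.
  - destruct HD, He; subst; destruct Hsc as [[-> ?]|[-> ?]]; lia.
  - destruct HD, He; subst; destruct Hsc as [[-> ?]|[-> ?]]; lia.
  - intro h; apply Hne in h; rewrite HcA, HcB, H1, H4 in h. destruct He, Hsc as [[-> ?]|[-> ?]]; lia.
  - intro h; apply Hne in h; rewrite HcA, HcB, H3 in h. destruct He; lia.
  - destruct HD, He; subst; destruct Hsc as [[-> ?]|[-> ?]]; ring_simplify in Hs; ring_simplify in Hgt; first [intro Hn; ring_simplify in Hn | ring_simplify]; nia.
  - destruct HD, He; subst; destruct Hsc as [[-> ?]|[-> ?]]; ring_simplify in Hs; ring_simplify in Hgt; first [intro Hn; ring_simplify in Hn | ring_simplify]; nia.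
  - destruct HD, He; subst; destruct Hsc as [[-> ?]|[-> ?]]; ring_simplify in Hs; ring_simplify in Hgt; first [intro Hn; ring_simplify in Hn | ring_simplify]; nia.
Qed.

Lemma nsep_swap x y a b : ~ separates x y a b -> ~ separates x y b a.
Proof. intros H h; apply H, sep_swap, h. Qed.

Lemma eq_branch a b z : farey_vertex z -> farey_adj a b ->
  fdet z a * fdet z a = fdet z b * fdet z b -> farey_adj z a /\ farey_adj z b.
Proof.
  intros Hz Hab Heq. unfold farey_adj in *.
  pose proof (lin_coords a b z Hab) as Hl.
  pose proof (sq1 _ Hab) as HD.
  set (al := cA a b z) in *. set (be := cB a b z) in *.
  assert (Hal : fdet z b = fdet a b * al) by (unfold al, cA; nia).
  assert (Hbe : fdet z a = - fdet a b * be) by (unfold be, cB; rewrite (fdet_anti a z); nia).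
  assert (Hsq : al * al = be * be) by (rewrite Hal, Hbe in Heq; nia).
  assert (Hpm : be = al \/ be = - al) by nia.
  assert (Hk : Z.abs al = 1).
  { apply (primitive z al Hz); rewrite Hl; simpl; destruct Hpm as [-> | ->].
    - exists (fst a + fst b); ring.
    - exists (fst a - fst b); ring.
    - exists (snd a + snd b); ring.
    - exists (snd a - snd b); ring. }
  rewrite Hal, Hbe, !Z.abs_mul, Z.abs_opp, Hab. destruct Hpm as [-> | ->]; rewrite ?Z.abs_opp; lia.
Qed.

Lemma tri a b z w : farey_vertex z -> farey_adj a b -> separates z w a b ->
 (farey_adj z a /\ farey_adj z b) \/
 exists c, farey_vertex c /\ farey_adj a c /\ farey_adj c b /\ c <> a /\ c <> b /\
  ~ separates z c a b /\
  ((separates z w a c /\ ~ separates w b a c) \/ (separates z w c b /\ ~ separates w a c b)).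
Proof.
  intros Hz Hab Hs.
  destruct (Z.lt_trichotomy (fdet z b * fdet z b) (fdet z a * fdet z a)) as [h|[h|h]].
  - right. destruct (branch1 b a z w (adj_sym _ _ Hab) (sep_swap _ _ _ _ Hs)) as
      [c [Hc [H1 [H2 [H3 [H4 [H5 [H6 H7]]]]]]]]; [lia|].
    exists c. split; [auto|]. split; [apply adj_sym; auto|]. split; [apply adj_sym; auto|].
    split; [auto|]. split; [auto|]. split; [apply nsep_swap; auto|].
    right; split; [apply sep_swap; auto| apply nsep_swap; auto].
  - left. apply eq_branch; auto.
  - right. destruct (branch1 a b z w Hab Hs) as
      [c [Hc [H1 [H2 [H3 [H4 [H5 [H6 H7]]]]]]]]; [lia|].
    exists c. split; [auto|]. split; [auto|]. split; [auto|].
    split; [auto|]. split; [auto|]. split; [auto|]. left; auto.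
Qed.

Lemma mpos_l p q : p > 0 -> p*q < 0 -> q < 0.
Proof. intros; nia. Qed.
Lemma mpos_l' p q : p > 0 -> q*p < 0 -> q < 0.
Proof. intros; nia. Qed.
Lemma mneg_l p q : p < 0 -> p*q < 0 -> q > 0.
Proof. intros; nia. Qed.

Lemma jump_core ax bx ay by_ ad bd s :
  bd*bd = 1 -> s*s = 1 -> s*ad*bd > 0 -> ad*ad >= 4 ->
  (ax*bx)*(ay*by_) < 0 ->
  (bx*(ax*bd - bx*ad))*(by_*(ay*bd - by_*ad)) < 0 ->
  (ax*bx)*(ad*bd) < 0 ->
  (bx*(s*ax - bx))*(by_*(s*ay - by_)) < 0 /\ bx*(s*ax - bx) < 0 /\
  (bx*(ax*bd - bx*ad))*(s*bd - ad) > 0.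
Proof.
  intros Hbd Hs Hm Had H1 H2 H3.
  set (m := s*ad*bd) in *.
  assert (Hm2 : m*m = ad*ad).
  { replace (m*m) with ((s*s)*(bd*bd)*(ad*ad)) by (unfold m; ring). rewrite Hs, Hbd; ring. }
  assert (Hm3 : m >= 2).
  { destruct (Z.le_gt_cases m 1) as [h|h]; [|lia]. assert (m = 1) by lia. rewrite H in Hm2; lia. }
  set (X := s*ax*bx). set (Y := s*ay*by_).
  assert (HXm : X * m < 0).
  { replace (X*m) with ((s*s)*((ax*bx)*(ad*bd))) by (unfold X, m; ring). rewrite Hs. lia. }
  assert (HX : X < 0) by (apply (mpos_l' m); lia).
  assert (HXY : X * Y < 0).
  { replace (X*Y) with ((s*s)*((ax*bx)*(ay*by_))) by (unfold X, Y; ring). rewrite Hs. lia. }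
  assert (HY : Y > 0) by (apply (mneg_l X); lia).
  assert (Ex : bd*s*(bx*(ax*bd - bx*ad)) = X - bx*bx*m).
  { unfold X, m. assert (bd*s*(bx*(ax*bd - bx*ad)) = s*ax*bx*(bd*bd) - bx*bx*(s*ad*bd)) by ring.
    rewrite H, Hbd; ring. }
  assert (Ey : bd*s*(by_*(ay*bd - by_*ad)) = Y - by_*by_*m).
  { unfold Y, m. assert (bd*s*(by_*(ay*bd - by_*ad)) = s*ay*by_*(bd*bd) - by_*by_*(s*ad*bd)) by ring.
    rewrite H, Hbd; ring. }
  assert (Hp : (X - bx*bx*m) * (Y - by_*by_*m) < 0).
  { rewrite <- Ex, <- Ey.
    replace (bd * s * (bx * (ax * bd - bx * ad)) * (bd * s * (by_ * (ay * bd - by_ * ad))))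
      with ((bd*bd)*(s*s)*((bx*(ax*bd - bx*ad))*(by_*(ay*bd - by_*ad)))) by ring.
    rewrite Hbd, Hs. lia. }
  assert (Hb2 : bx*bx*m >= 0) by (apply Z.le_ge, Z.mul_nonneg_nonneg; [apply Z.square_nonneg|lia]).
  assert (Hx2 : X - bx*bx*m < 0) by lia.
  assert (Hy2 : Y - by_*by_*m > 0) by (apply (mneg_l (X - bx*bx*m)); lia).
  assert (Hby : by_*by_*m >= by_*by_) by (pose proof (Z.square_nonneg by_); nia).
  assert (Hy3 : Y - by_*by_ > 0) by lia.
  assert (Ex' : bx*(s*ax - bx) = X - bx*bx) by (unfold X; ring).
  assert (Ey' : by_*(s*ay - by_) = Y - by_*by_) by (unfold Y; ring).
  assert (Hx3 : X - bx*bx < 0) by (pose proof (Z.square_nonneg bx); lia).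
  assert (Hz : (bd*s)*(s*bd - ad) = 1 - m).
  { unfold m. replace ((bd*s)*(s*bd - ad)) with ((s*s)*(bd*bd) - s*ad*bd) by ring. rewrite Hs, Hbd; ring. }
  assert (Hw : (bx*(ax*bd - bx*ad))*(s*bd - ad) = (bd*s*(bx*(ax*bd - bx*ad)))*((bd*s)*(s*bd - ad))).
  { replace ((bd*s*(bx*(ax*bd - bx*ad)))*((bd*s)*(s*bd - ad))) with
      ((bd*bd)*(s*s)*((bx*(ax*bd - bx*ad))*(s*bd - ad))) by ring. rewrite Hs, Hbd; ring. }
  split; [|split].
  - rewrite Ex', Ey'. apply Z.mul_neg_pos; lia.
  - rewrite Ex'; lia.
  - rewrite Hw, Ex, Hz. apply Z.lt_gt, Z.mul_neg_neg; lia.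
Qed.

Lemma jump_alg p a d x y :
 farey_adj a p -> farey_adj a d ->
 separates x y a p -> separates x y a d -> separates x d a p ->
 farey_adj p d \/
 exists c, farey_vertex c /\ farey_adj a c /\ c <> a /\ c <> p /\ c <> d /\ separates x y a c /\
   ~ separates x p a c /\ ~ separates x c a d.
Proof.
  intros Hap Had Hxyp Hxyd Hxdp.
  pose proof (coords a p Hap) as Hf.
  pose proof (cA_a a p Hap) as H1. pose proof (cB_b a p Hap) as H2.
  pose proof (cA_b a p) as H3. pose proof (cB_a a p) as H4.
  assert (Hne : forall u v, u = v -> cA a p u = cA a p v /\ cB a p u = cB a p v)
    by (intros; subst; auto).
  unfold farey_adj in Hap.
  set (D := fdet a p) in *.
  assert (HD : D = 1 \/ D = -1) by lia.
  set (ad := cA a p d) in *. set (bd := cB a p d) in *.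
  assert (Hbd : bd = 1 \/ bd = -1).
  { unfold farey_adj in Had. rewrite Hf, H1, H4 in Had. rewrite Z.abs_mul, Hap in Had. lia. }
  assert (Had0 : ad <> 0).
  { destruct (sep_nz _ _ _ _ Hxdp) as [_ [h _]]. rewrite Hf, H2, H3 in h. intro HH; apply h.
    unfold ad in HH; rewrite HH; ring. }
  destruct (Z.eq_dec (ad*ad) 1) as [Hq|Hq].
  { left. unfold farey_adj. rewrite Hf, H3, H2. try fold ad bd.
    replace (D * (0 * bd - 1 * ad)) with (-(D*ad)) by ring.
    rewrite Z.abs_opp, Z.abs_mul, Hap. nia. }
  assert (Hq4 : ad*ad >= 4).
  { assert (ad >= 2 \/ ad <= -2).
    { destruct (Z.le_gt_cases (Z.abs ad) 1) as [h|h]; [|lia].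
      assert (ad = 1 \/ ad = -1) by lia. destruct H as [->| ->]; lia. }
    nia. }
  right.
  pose (s := Z.sgn (ad*bd)).
  assert (Hsc : (s = 1 /\ ad*bd > 0) \/ (s = -1 /\ ad*bd < 0)).
  { apply sgn_cases. destruct Hbd; subst; lia. }
  set (c0 := lin 1 a s p).
  assert (Hc0 : Z.abs (fdet c0 a) = 1).
  { rewrite Hf. unfold c0. rewrite cA_lin, cB_lin, H1, H2, H3, H4.
    rewrite Z.abs_mul, Hap. destruct Hsc as [[-> _]|[-> _]]; lia. }
  destruct (normalize c0 a Hc0) as [e [He Hc]].
  exists (scale e c0). split; [exact Hc|].
  assert (HcA : cA a p (scale e c0) = e)
    by (unfold c0; rewrite cA_scale, cA_lin, H1, H3; ring).
  assert (HcB : cB a p (scale e c0) = e * s)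
    by (unfold c0; rewrite cB_scale, cB_lin, H2, H4; ring).
  split.
  { unfold farey_adj. rewrite Hf, HcA, HcB, H1, H4, Z.abs_mul, Hap.
    destruct He, Hsc as [[-> ?]|[-> ?]]; subst; lia. }
  split; [intro h; apply Hne in h; rewrite HcA, HcB, H1, H4 in h; destruct He, Hsc as [[-> ?]|[-> ?]]; lia|].
  split; [intro h; apply Hne in h; rewrite HcA, H3 in h; destruct He; lia|].
  split; [intro h; apply Hne in h; rewrite HcA in h; try fold ad in h; destruct He; subst; nia|].
  assert (Hs1 : s*s = 1) by (destruct Hsc as [[-> ?]|[-> ?]]; lia).
  assert (Hs2 : s*ad*bd > 0) by (destruct Hsc as [[-> ?]|[-> ?]]; lia).
  unfold separates in *.
  repeat match goal with |- context[fdet ?u ?v] => rewrite (Hf u v) end.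
  repeat match goal with H : context[fdet ?u ?v] |- _ =>
    match H with Hf => fail 1 | _ => rewrite (Hf u v) in H end end.
  rewrite ?HcA, ?HcB, ?H1, ?H2, ?H3, ?H4 in *.
  change (cA a p d) with ad in Hxyd, Hxdp |- *. change (cB a p d) with bd in Hxyd, Hxdp |- *.
  set (ax := cA a p x) in *. set (bx := cB a p x) in *.
  set (ay := cA a p y) in *. set (by_ := cB a p y) in *.
  clearbody ax bx ay by_ ad bd s D.
  assert (Hbd2 : bd*bd = 1) by (destruct Hbd; subst; lia).
  assert (C1 : (ax*bx)*(ay*by_) < 0).
  { destruct HD; subst; ring_simplify in Hxyp; ring_simplify; lia. }
  assert (C2 : (bx*(ax*bd - bx*ad))*(by_*(ay*bd - by_*ad)) < 0).
  { destruct HD; subst; ring_simplify in Hxyd; ring_simplify; lia. }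
  assert (C3 : (ax*bx)*(ad*bd) < 0).
  { destruct HD; subst; ring_simplify in Hxdp; ring_simplify; lia. }
  destruct (jump_core ax bx ay by_ ad bd s Hbd2 Hs1 Hs2 Hq4 C1 C2 C3) as [K1 [K2 K3]].
  clear Hxyp Hxyd Hxdp Hne Hc HcA HcB c0 Hc0 Hf.
  destruct HD, He, Hbd, Hsc as [[-> ?]|[-> ?]]; subst;
  repeat split; try intro Hn;
  ring_simplify in K1; ring_simplify in K2; ring_simplify in K3;
  try ring_simplify in Hn; try ring_simplify; lia.
Qed.

Lemma contig_fact z u c x : farey_adj z u -> fdet x u <> 0 ->
  (c = u \/ separates x c z u) ->
  cA z u x * (cB z u c * (cA z u x * cB z u c - cB z u x * cA z u c)) > 0.
Proof.
  intros Hzu Hx Hc.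
  pose proof (coords z u Hzu) as Hf.
  pose proof (cA_a z u Hzu) as H1. pose proof (cB_b z u Hzu) as H2.
  pose proof (cA_b z u) as H3. pose proof (cB_a z u) as H4.
  unfold farey_adj in Hzu. set (D := fdet z u) in *.
  assert (HD : D = 1 \/ D = -1) by lia.
  rewrite Hf, H2, H3 in Hx.
  destruct Hc as [->|Hc].
  - rewrite H2, H3. set (ax := cA z u x) in *. set (bx := cB z u x) in *.
    assert (ax <> 0) by (intro h; apply Hx; rewrite h; ring).
    ring_simplify. nia.
  - unfold separates in Hc.
    repeat match goal with H : context[fdet ?v ?w] |- _ =>
      match H with Hf => fail 1 | _ => rewrite (Hf v w) in H end end.
    rewrite ?H1, ?H2, ?H3, ?H4 in *.
    set (ax := cA z u x) in *. set (bx := cB z u x) in *.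
    set (ac := cA z u c) in *. set (bc := cB z u c) in *.
    clearbody ax bx ac bc D.
    assert (K : ax*bx*(ac*bc) < 0) by (destruct HD; subst; ring_simplify in Hc; ring_simplify; lia).
    assert (E : ax * (bc * (ax * bc - bx * ac)) = (ax*bc)*(ax*bc) - ax*bx*(ac*bc)) by ring.
    rewrite E. pose proof (Z.square_nonneg (ax*bc)). lia.
Qed.

Lemma contig_alg z u c d x y : farey_adj z u -> separates x y z u ->
  (c = u \/ separates x c z u) -> (d = u \/ separates x d z u) ->
  ~ separates x z c d.
Proof.
  intros Hzu Hs Hc Hd.
  destruct (sep_nz _ _ _ _ Hs) as [_ [_ [Hx _]]].
  pose proof (contig_fact z u c x Hzu Hx Hc) as Fc.
  pose proof (contig_fact z u d x Hzu Hx Hd) as Fd.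
  pose proof (coords z u Hzu) as Hf.
  pose proof (cA_a z u Hzu) as H1. pose proof (cB_b z u Hzu) as H2.
  pose proof (cA_b z u) as H3. pose proof (cB_a z u) as H4.
  unfold farey_adj in Hzu. set (D := fdet z u) in *.
  assert (HD : D = 1 \/ D = -1) by lia.
  unfold separates. rewrite !Hf. rewrite H1, H4.
  set (ax := cA z u x) in *. set (bx := cB z u x) in *.
  set (ac := cA z u c) in *. set (bc := cB z u c) in *.
  set (a_d := cA z u d) in *. set (b_d := cB z u d) in *.
  clearbody ax bx ac bc a_d b_d D.
  set (Bc := bc * (ax * bc - bx * ac)) in *. set (Bd := b_d * (ax * b_d - bx * a_d)) in *.
  assert (HB : Bc * Bd > 0).
  { assert (h : (ax*Bc)*(ax*Bd) > 0) by (apply Z.lt_gt, Z.mul_pos_pos; lia).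
    assert (hx : ax <> 0) by (intro h0; rewrite h0 in Fc; lia).
    assert (ax*ax > 0) by (destruct (Z.lt_trichotomy ax 0) as [h1|[h1|h1]]; [nia|lia|nia]).
    replace ((ax*Bc)*(ax*Bd)) with ((ax*ax)*(Bc*Bd)) in h by ring.
    apply Z.lt_gt. apply (proj1 (Z.mul_pos_cancel_l (ax*ax) (Bc*Bd) ltac:(lia))); lia. }
  intro Hn. unfold Bc, Bd in HB.
  destruct HD; subst; ring_simplify in Hn; ring_simplify in HB; lia.
Qed.

Definition sd (a b t : V) := fdet t a * fdet t b.

Lemma hits_gen a b : farey_vertex a -> farey_vertex b -> farey_adj a b ->
  forall l u d, adj_chain (u :: l) -> Forall farey_vertex (u :: l) ->
  sd a b u * sd a b (last (u :: l) d) < 0 ->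
  exists z, In z (u :: l) /\ (z = a \/ z = b).
Proof.
  intros Ha Hb Hab. induction l as [|u' l IH]; intros u d Hc Hf Hs.
  - simpl in Hs. nia.
  - simpl in Hc. destruct Hc as [Huu Hc].
    inversion Hf; subst.
    inversion H2; subst.
    destruct (Z.eq_dec (sd a b u') 0) as [h0|h0].
    + exists u'. split; [simpl; auto|].
      unfold sd in h0. apply Z.mul_eq_0 in h0. destruct h0 as [h|h].
      * left. apply fdet0_eq; auto.
      * right. apply fdet0_eq; auto.
    + assert (Hns := noncross _ _ _ _ Huu Hab).
      assert (Hge : sd a b u * sd a b u' >= 0).
      { unfold sd, separates in *. nia. }
      change (last (u :: u' :: l) d) with (last (u' :: l) d) in Hs.
      destruct (IH u' d Hc H2) as [z [Hz Hz']].
      * set (A := sd a b u) in *. set (B := sd a b u') in *. set (C := sd a b (last (u' :: l) d)) in *.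
        destruct (Z.lt_trichotomy A 0) as [h1|[h1|h1]]; destruct (Z.lt_trichotomy B 0) as [h2|[h2|h2]];
        try lia; nia.
      * exists z; split; [simpl; auto| auto].
Qed.

Lemma in_last (l : list V) d : l <> [] -> In (last l d) l.
Proof.
  induction l as [|u l IH]; intros H; [congruence|].
  destruct l as [|u' l]; simpl; auto.
  right. apply IH. discriminate.
Qed.

Lemma path_hits x y p a b : farey_path x y p -> farey_vertex a -> farey_vertex b ->
  farey_adj a b -> separates x y a b -> exists z, In z p /\ (z = a \/ z = b).
Proof.
  intros [Hne [Hhd [Hl [Hf Hc]]]] Ha Hb Hab Hs.
  destruct p as [|u l]; [congruence|]. simpl in Hhd. subst u.
  apply (hits_gen a b Ha Hb Hab l x x); auto.
  rewrite Hl. unfold sd, separates in *. nia.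
Qed.

Definition Veq_dec (u v : V) : {u = v} + {u <> v}.
Proof. decide equality; apply Z.eq_dec. Defined.

Lemma adj_neq u v : farey_adj u v -> u <> v.
Proof. intros H h; subst; unfold farey_adj in H; rewrite fdet_self in H; discriminate. Qed.

Lemma endpoint_dec z e : {endpoint z e} + {~ endpoint z e}.
Proof.
  unfold endpoint. destruct (Veq_dec z (fst e)); [left; auto|].
  destruct (Veq_dec z (snd e)); [left; auto|right; tauto].
Qed.

Lemma endpoints_eq u v e : endpoint u e -> endpoint v e -> u <> v ->
  (u = fst e /\ v = snd e) \/ (u = snd e /\ v = fst e).
Proof. unfold endpoint; intros [->| ->] [->| ->] h; tauto. Qed.

Lemma sep_endpoints x z u v e : endpoint u e -> endpoint v e -> u <> v ->
  separates x z (fst e) (snd e) -> separates x z u v.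
Proof.
  intros Hu Hv Hne Hs. destruct (endpoints_eq u v e Hu Hv Hne) as [[-> ->]|[-> ->]]; auto.
  apply sep_swap; auto.
Qed.

Lemma adj_endpoints u v e : endpoint u e -> endpoint v e -> u <> v ->
  farey_adj (fst e) (snd e) -> farey_adj u v.
Proof.
  intros Hu Hv Hne Hs. destruct (endpoints_eq u v e Hu Hv Hne) as [[-> ->]|[-> ->]]; auto.
  apply adj_sym; auto.
Qed.

Lemma same_edge_of u v e f : endpoint u e -> endpoint v e -> u <> v ->
  endpoint u f -> endpoint v f -> same_edge e f.
Proof.
  intros H1 H2 Hne H3 H4.
  destruct (endpoints_eq u v e H1 H2 Hne) as [[E1 E2]|[E1 E2]];
  destruct (endpoints_eq u v f H3 H4 Hne) as [[F1 F2]|[F1 F2]];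
  destruct e as [e1 e2], f as [f1 f2]; simpl in *; subst; unfold same_edge; simpl; auto.
Qed.

Lemma same_edge_endpoint t e f : same_edge e f -> endpoint t e -> endpoint t f.
Proof.
  destruct e, f; unfold same_edge, endpoint; simpl; intros [h|h] h'; inversion h; subst; tauto.
Qed.

Lemma same_edge_endpoint' t e f : same_edge e f -> endpoint t f -> endpoint t e.
Proof.
  destruct e, f; unfold same_edge, endpoint; simpl; intros [h|h] h'; inversion h; subst; tauto.
Qed.

Section Lad.
Variables (x y : V) (E : list (V * V)).
Hypothesis (Hx : farey_vertex x) (Hy : farey_vertex y) (HR : ladder_rungs x y E).

Notation M := (length E).
Notation Ek k := (nth k E e0).

Lemma rung_nth k : (k < M)%nat -> rung x y (Ek k).
Proof. intros h. destruct HR as [_ [H _]]. apply H, nth_In, h. Qed.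

Lemma ord i j : (i < j < M)%nat -> ~ same_edge (Ek i) (Ek j) /\
     forall z, endpoint z (Ek j) -> ~ endpoint z (Ek i) ->
       separates x z (fst (Ek i)) (snd (Ek i)).
Proof. destruct HR as [_ [_ [_ H]]]. apply H. Qed.

Lemma find_rung e : rung x y e -> exists j, (j < M)%nat /\ same_edge e (Ek j).
Proof.
  intros h. destruct HR as [_ [_ [H _]]]. destruct (H e h) as [f [Hf Hs]].
  destruct (In_nth E f e0 Hf) as [j [Hj Hj']]. exists j; split; auto. rewrite Hj'; auto.
Qed.

Lemma ep_fv k t : (k < M)%nat -> endpoint t (Ek k) -> farey_vertex t.
Proof. intros h [->| ->]; destruct (rung_nth k h) as [? [? _]]; auto. Qed.

Lemma ep_fst k : endpoint (fst (Ek k)) (Ek k).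
Proof. left; auto. Qed.
Lemma ep_snd k : endpoint (snd (Ek k)) (Ek k).
Proof. right; auto. Qed.

Lemma sep_nth k u v : (k < M)%nat -> endpoint u (Ek k) -> endpoint v (Ek k) -> u <> v ->
  separates x y u v.
Proof.
  intros h Hu Hv Hne. destruct (rung_nth k h) as [_ [_ [_ Hs]]].
  apply (sep_endpoints x y u v (Ek k)); auto.
Qed.

Lemma adj_nth k u v : (k < M)%nat -> endpoint u (Ek k) -> endpoint v (Ek k) -> u <> v ->
  farey_adj u v.
Proof.
  intros h Hu Hv Hne. destruct (rung_nth k h) as [_ [_ [Ha _]]].
  apply (adj_endpoints u v (Ek k)); auto.
Qed.

Lemma fst_snd_neq k : (k < M)%nat -> fst (Ek k) <> snd (Ek k).
Proof. intros h. destruct (rung_nth k h) as [_ [_ [Ha _]]]. apply adj_neq; auto. Qed.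

Lemma ord_sep i j z u v : (i < j < M)%nat -> endpoint z (Ek j) -> ~ endpoint z (Ek i) ->
  endpoint u (Ek i) -> endpoint v (Ek i) -> u <> v -> separates x z u v.
Proof.
  intros h Hz Hz' Hu Hv Hne. apply (sep_endpoints x z u v (Ek i)); auto.
  apply (proj2 (ord i j h)); auto.
Qed.

Lemma first_adj t : (0 < M)%nat -> endpoint t (Ek 0) -> farey_adj x t.
Proof.
  intros hM Ht. unfold endpoint in Ht.
  destruct (rung_nth 0 hM) as [Ha [Hb [Hab Hs]]].
  set (a := fst (Ek 0)) in *. set (b := snd (Ek 0)) in *.
  destruct (tri a b x y Hx Hab Hs) as [[h1 h2]|[c [Hc [Hac [Hcb [Hca [Hcb' [Hn [[S1 S2]|[S1 S2]]]]]]]]]].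
  - destruct Ht as [-> | ->]; auto.
  - exfalso. assert (Hr : rung x y (a, c)) by exact (conj Ha (conj Hc (conj Hac S1))).
    destruct (find_rung _ Hr) as [j [Hj Hsj]].
    destruct j as [|j].
    + destruct (same_edge_endpoint c _ _ Hsj (or_intror eq_refl)) as [h|h]; auto.
    + apply Hn. apply (ord_sep 0 (S j) c a b); try lia.
      * apply (same_edge_endpoint c (a,c)); auto. right; auto.
      * intros [h|h]; auto.
      * apply ep_fst.
      * apply ep_snd.
      * apply adj_neq; auto.
  - exfalso. assert (Hr : rung x y (c, b)) by exact (conj Hc (conj Hb (conj Hcb S1))).
    destruct (find_rung _ Hr) as [j [Hj Hsj]].
    destruct j as [|j].
    + destruct (same_edge_endpoint c _ _ Hsj (or_introl eq_refl)) as [h|h]; auto.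
    + apply Hn. apply (ord_sep 0 (S j) c a b); try lia.
      * apply (same_edge_endpoint c (c,b)); auto. left; auto.
      * intros [h|h]; auto.
      * apply ep_fst.
      * apply ep_snd.
      * apply adj_neq; auto.
Qed.

Lemma last_adj t : (0 < M)%nat -> endpoint t (Ek (M-1)) -> farey_adj y t.
Proof.
  intros hM Ht. unfold endpoint in Ht.
  assert (hM' : (M - 1 < M)%nat) by lia.
  destruct (rung_nth (M-1) hM') as [Ha [Hb [Hab Hs]]].
  set (a := fst (Ek (M-1))) in *. set (b := snd (Ek (M-1))) in *.
  destruct (tri a b y x Hy Hab (sep_swap2 _ _ _ _ Hs)) as
    [[h1 h2]|[c [Hc [Hac [Hcb [Hca [Hcb' [Hn [[S1 S2]|[S1 S2]]]]]]]]]].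
  - destruct Ht as [H| H]; rewrite H; [exact h1|exact h2].
  - exfalso. assert (Hr : rung x y (a, c)) by exact (conj Ha (conj Hc (conj Hac (sep_swap2 _ _ _ _ S1)))).
    destruct (find_rung _ Hr) as [j [Hj Hsj]].
    assert (Hj' : j <> (M-1)%nat).
    { intro; subst j. destruct (same_edge_endpoint c _ _ Hsj (or_intror eq_refl)) as [h|h]; auto. }
    apply S2. apply (ord_sep j (M-1) b a c); try lia.
    + apply ep_snd.
    + intro h. destruct (same_edge_endpoint' b _ _ Hsj h) as [h'|h'].
      * apply (adj_neq a b); auto.
      * auto.
    + apply (same_edge_endpoint a (a,c)); auto. left; auto.
    + apply (same_edge_endpoint c (a,c)); auto. right; auto.
    + apply adj_neq; auto.
  - exfalso. assert (Hr : rung x y (c, b)) by exact (conj Hc (conj Hb (conj Hcb (sep_swap2 _ _ _ _ S1)))).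
    destruct (find_rung _ Hr) as [j [Hj Hsj]].
    assert (Hj' : j <> (M-1)%nat).
    { intro; subst j. destruct (same_edge_endpoint c _ _ Hsj (or_introl eq_refl)) as [h|h]; auto. }
    apply S2. apply (ord_sep j (M-1) a c b); try lia.
    + apply ep_fst.
    + intro h. destruct (same_edge_endpoint' a _ _ Hsj h) as [h'|h'].
      * auto.
      * apply (adj_neq a b); auto.
    + apply (same_edge_endpoint c (c,b)); auto. left; auto.
    + apply (same_edge_endpoint b (c,b)); auto. right; auto.
    + apply adj_neq; auto.
Qed.

Lemma ep_cases t u v e : endpoint t e -> endpoint u e -> endpoint v e -> u <> v -> t = u \/ t = v.
Proof. unfold endpoint; intros [->| ->] [->| ->] [->| ->] h; tauto. Qed.

Lemma jump_adj k p a d : (1 <= k)%nat -> (k < M)%nat ->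
  endpoint p (Ek (k-1)) -> endpoint a (Ek (k-1)) -> endpoint a (Ek k) -> endpoint d (Ek k) ->
  p <> a -> a <> d -> farey_adj p d.
Proof.
  intros h1 h2 Hp Ha1 Ha2 Hd Hpa Had.
  assert (hk : (k - 1 < k < M)%nat) by lia.
  assert (hk1 : (k - 1 < M)%nat) by lia.
  assert (Hdp : d <> p).
  { intro; subst d. apply (proj1 (ord (k-1) k hk)). apply (same_edge_of p a); auto. }
  assert (Hdn : ~ endpoint d (Ek (k-1))).
  { intro h. destruct (ep_cases d p a _ h Hp Ha1 Hpa); auto. }
  assert (Sxd : separates x d a p) by (apply (ord_sep (k-1) k d a p); auto).
  assert (Aap : farey_adj a p) by (apply (adj_nth (k-1)); auto).
  assert (Aad : farey_adj a d) by (apply (adj_nth k); auto).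
  assert (Sp : separates x y a p) by (apply (sep_nth (k-1)); auto).
  assert (Sd : separates x y a d) by (apply (sep_nth k); auto).
  destruct (jump_alg p a d x y Aap Aad Sp Sd Sxd) as [H|[c [Hc [Hac [Hca [Hcp [Hcd [S1 [N1 N2]]]]]]]]]; auto.
  exfalso.
  assert (Hfa : farey_vertex a) by (apply (ep_fv k); auto).
  assert (Hr : rung x y (a, c)) by exact (conj Hfa (conj Hc (conj Hac S1))).
  destruct (find_rung _ Hr) as [j [Hj Hsj]].
  assert (EA : endpoint a (Ek j)) by (apply (same_edge_endpoint a (a,c)); auto; left; auto).
  assert (EC : endpoint c (Ek j)) by (apply (same_edge_endpoint c (a,c)); auto; right; auto).
  destruct (Nat.lt_trichotomy j (k-1)) as [hj|[hj|hj]].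
  - apply N1. apply (ord_sep j (k-1) p a c); auto; try lia.
    intro h. destruct (ep_cases p a c _ h EA EC); auto.
  - subst j. destruct (ep_cases c p a _ EC Hp Ha1 Hpa); auto.
  - destruct (Nat.eq_dec j k) as [->|hjk].
    + destruct (ep_cases c a d _ EC Ha2 Hd Had); auto.
    + apply N2. apply (ord_sep k j c a d); auto; try lia.
      intro h. destruct (ep_cases c a d _ h Ha2 Hd Had); auto.
Qed.

Lemma contig i k j z : (i < k < j)%nat -> (j < M)%nat ->
  endpoint z (Ek i) -> endpoint z (Ek j) -> endpoint z (Ek k).
Proof.
  intros h hj Hi Hj.
  destruct (endpoint_dec z (Ek k)) as [e|ne]; auto. exfalso.
  assert (hi : (i < M)%nat) by lia. assert (hk : (k < M)%nat) by lia.
  set (u := if Veq_dec z (fst (Ek i)) then snd (Ek i) else fst (Ek i)).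
  assert (Hu : endpoint u (Ek i) /\ z <> u).
  { unfold u. destruct (Veq_dec z (fst (Ek i))) as [e|e].
    - split; [apply ep_snd|]. rewrite e. apply fst_snd_neq; auto.
    - split; [apply ep_fst|auto]. }
  destruct Hu as [Hu Hzu].
  set (c := fst (Ek k)). set (d := snd (Ek k)).
  assert (Sz : separates x z c d) by (apply (proj2 (ord k j ltac:(lia))); auto).
  assert (Azu : farey_adj z u) by (apply (adj_nth i); auto).
  assert (Szu : separates x y z u) by (apply (sep_nth i); auto).
  assert (Gc : forall t, endpoint t (Ek k) -> t = u \/ separates x t z u).
  { intros t Ht. destruct (endpoint_dec t (Ek i)) as [e|e].
    - left. destruct (ep_cases t z u _ e Hi Hu Hzu) as [-> | ->]; auto. contradiction.
    - right. apply (ord_sep i k t z u); auto; lia. }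
  apply (contig_alg z u c d x y Azu Szu (Gc c (ep_fst k)) (Gc d (ep_snd k)) Sz).
Qed.

End Lad.

Definition pa (r : nat * V * V) : nat := fst (fst r).
Definition pv (r : nat * V * V) : V := snd (fst r).
Definition pu (r : nat * V * V) : V := snd r.

Definition keys (rs : list (nat * V * V)) : list V :=
  concat (map (fun r => if Nat.eqb (pa r) 1 then [pv r] else [pv r; pu r]) rs).

Fixpoint Gadj (y p : V) (rs : list (nat * V * V)) : Prop :=
  match rs with
  | [] => farey_adj p y
  | r :: rs' => farey_adj p (pv r) /\
      (pa r = 1%nat -> match rs' with r' :: _ => farey_adj p (pv r') | [] => False end) /\
      Gadj y (pv r) rs'
  end.

Fixpoint Hits (P : list V) (rs : list (nat * V * V)) : Prop :=
  match rs with
  | [] => True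
  | r :: rs' => (pa r <> 1%nat -> In (pv r) P \/ In (pu r) P) /\
      (match rs' with r' :: _ => In (pv r) P \/ In (pv r') P | [] => True end) /\
      Hits P rs'
  end.

Definition effr (y : V) (rs : list (nat * V * V)) := eff_go (map pv rs ++ [y]) (map pa rs).

Lemma effr_nil y : effr y [] = [y].
Proof. reflexivity. Qed.

Lemma effr_cons y r rs : effr y (r :: rs) =
  if Nat.eqb (pa r) 1 then
    match rs with [] => [y] | r' :: rs' => pv r' :: effr y rs' end
  else pv r :: effr y rs.
Proof.
  unfold effr. simpl. destruct (Nat.eqb (pa r) 1); auto.
  destruct rs as [|r' rs']; simpl; auto.
Qed.

Lemma strong_ind (P : list (nat*V*V) -> Prop) :
  (forall rs, (forall rs', (length rs' < length rs)%nat -> P rs') -> P rs) -> forall rs, P rs.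
Proof.
  intros H. assert (forall n rs, (length rs <= n)%nat -> P rs).
  { induction n as [|n IHn]; intros rs h; apply H; intros rs' h'; [lia|apply IHn; lia]. }
  intros rs; apply (H0 (length rs)); lia.
Qed.

Lemma effr_shape y rs : exists l, effr y rs = l ++ [y] /\ incl l (map pv rs).
Proof.
  revert rs. apply strong_ind. intros rs IH.
  destruct rs as [|r rs]; [exists []; split; [reflexivity| intros z []]|].
  rewrite effr_cons. destruct (Nat.eqb (pa r) 1).
  - destruct rs as [|r' rs']; [exists []; split; [reflexivity| intros z []]|].
    destruct (IH rs') as [l [Hl Hi]]; [simpl; lia|].
    exists (pv r' :: l). rewrite Hl; split; [reflexivity|].
    intros z [<-|hz]; simpl; [auto| right; right; apply Hi, hz].
  - destruct (IH rs) as [l [Hl Hi]]; [simpl; lia|].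
    exists (pv r :: l). rewrite Hl; split; [reflexivity|].
    intros z [<-|hz]; simpl; [auto| right; apply Hi, hz].
Qed.

Lemma effr_chain y : forall rs p, Gadj y p rs -> adj_chain (p :: effr y rs).
Proof.
  apply (strong_ind (fun rs => forall p, Gadj y p rs -> adj_chain (p :: effr y rs))).
  intros rs IH p HG.
  destruct rs as [|r rs]; [simpl in *; auto|].
  simpl in HG. destruct HG as [H1 [H2 H3]].
  rewrite effr_cons. destruct (Nat.eqb (pa r) 1) eqn:Ea.
  - apply Nat.eqb_eq in Ea. specialize (H2 Ea).
    destruct rs as [|r' rs']; [contradiction|].
    simpl in H3. destruct H3 as [_ [_ H3]].
    assert (adj_chain (pv r' :: effr y rs')) by (apply IH; auto; simpl; lia).
    simpl; split; auto.
  - assert (adj_chain (pv r :: effr y rs)) by (apply IH; auto; simpl; lia).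
    simpl; split; auto.
Qed.

Lemma nd_app_disj {A} (l1 l2 : list A) t : NoDup (l1 ++ l2) -> In t l1 -> ~ In t l2.
Proof.
  induction l1 as [|u l1 IH]; simpl; intros H Hin; [contradiction|].
  inversion H; subst. destruct Hin as [<-|Hin].
  - intro h; apply H2; apply in_or_app; auto.
  - apply IH; auto.
Qed.

Lemma nd_app_r {A} (l1 l2 : list A) : NoDup (l1 ++ l2) -> NoDup l2.
Proof. apply NoDup_app_remove_l. Qed.

Lemma hits_count y (P : list V) : forall rs, NoDup (keys rs) -> Hits P rs ->
  exists W, NoDup W /\ incl W P /\ incl W (keys rs) /\ S (length W) = length (effr y rs).
Proof.
  apply (strong_ind (fun rs => NoDup (keys rs) -> Hits P rs ->
    exists W, NoDup W /\ incl W P /\ incl W (keys rs) /\ S (length W) = length (effr y rs))).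
  intros rs IH Hnd Hh.
  destruct rs as [|r rs]; [exists []; repeat split; [constructor|intros z []|intros z []]|].
  simpl in Hh. destruct Hh as [H1 [H2 H3]].
  rewrite effr_cons. unfold keys in Hnd |- *. simpl in Hnd |- *.
  destruct (Nat.eqb (pa r) 1) eqn:Ea.
  - destruct rs as [|r' rs'].
    + exists []; repeat split; [constructor|intros z []|intros z []].
    + simpl in H3. destruct H3 as [_ [_ H3]].
      simpl in Hnd |- *.
      set (K := if (pa r' =? 1)%nat then [pv r'] else [pv r'; pu r']) in *.
      fold (keys rs') in *.
      assert (HK : In (pv r') K) by (unfold K; destruct (pa r' =? 1)%nat; simpl; auto).
      assert (Hnd2 : NoDup ([pv r] ++ K ++ keys rs')) by exact Hnd.
      assert (Hnd' : NoDup (keys rs')) by (apply nd_app_r in Hnd2; apply nd_app_r in Hnd2; auto).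
      destruct (IH rs') as [W [HW1 [HW2 [HW3 HW4]]]]; auto; [simpl; lia|].
      assert (Hz : exists z, In z P /\ (z = pv r \/ z = pv r') ).
      { destruct H2 as [h|h]; eexists; split; eauto. }
      destruct Hz as [z [HzP Hz]].
      exists (z :: W). split; [|split; [|split]].
      * constructor; auto. intro hz. apply HW3 in hz.
        destruct Hz as [->| ->].
        -- apply (nd_app_disj _ _ (pv r) Hnd2); [simpl; auto|]. apply in_or_app; auto.
        -- apply nd_app_r in Hnd2. apply (nd_app_disj _ _ (pv r') Hnd2); auto.
      * intros t [<-|ht]; auto.
      * intros t [<-|ht].
        -- destruct Hz as [->| ->]; simpl; auto. right.
           apply in_or_app; left. auto.
        -- right. apply in_or_app; right. apply HW3; auto.
      * simpl. lia.
  - assert (Hnd' : NoDup (keys rs)).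
    { simpl in Hnd. apply NoDup_cons_iff in Hnd. destruct Hnd as [_ Hnd].
      apply NoDup_cons_iff in Hnd. destruct Hnd as [_ Hnd]. exact Hnd. }
    destruct (IH rs ltac:(simpl; lia) Hnd' H3) as [W [HW1 [HW2 [HW3 HW4]]]].
    assert (Hn1 : pa r <> 1%nat) by (intro h; rewrite h in Ea; discriminate).
    destruct (H1 Hn1) as [Hz|Hz]; [exists (pv r :: W) | exists (pu r :: W)];
    (split; [|split; [|split]]).
    + constructor; auto. intro h. apply HW3 in h. simpl in Hnd.
      apply NoDup_cons_iff in Hnd. destruct Hnd as [h' _]. apply h'. simpl; auto.
    + intros t [<-|ht]; auto.
    + intros t [<-|ht]; simpl; auto.
    + simpl; lia.
    + constructor; auto. intro h. apply HW3 in h. simpl in Hnd.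
      apply NoDup_cons_iff in Hnd. destruct Hnd as [_ Hnd].
      apply NoDup_cons_iff in Hnd. destruct Hnd as [h' _]. apply h'. auto.
    + intros t [<-|ht]; auto.
    + intros t [<-|ht]; simpl; auto.
    + simpl; lia.
Qed.

Definition fl (ru : list (nat * V)) : list V := concat (map (fun kv => repeat (snd kv) (fst kv)) ru).
Definition other (e : V * V) (z : V) : V := if Veq_dec z (fst e) then snd e else fst e.

Lemma other_ep e z : endpoint (other e z) e.
Proof. unfold other; destruct (Veq_dec z (fst e)); [right|left]; auto. Qed.

Lemma other_cases e z t : endpoint z e -> endpoint t e -> t = z \/ t = other e z.
Proof.
  unfold other, endpoint; intros Hz Ht. destruct (Veq_dec z (fst e)) as [h|h].
  - destruct Ht as [->| ->]; auto.
  - destruct Hz as [Hz|Hz]; [contradiction|]. destruct Ht as [->| ->]; auto.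
Qed.

Lemma other_neq e z : fst e <> snd e -> endpoint z e -> other e z <> z.
Proof.
  unfold other, endpoint; intros Hne Hz. destruct (Veq_dec z (fst e)) as [h|h].
  - subst; auto.
  - destruct Hz; [contradiction|subst; auto].
Qed.

Lemma fl_cons k z ru : fl ((k,z)::ru) = repeat z k ++ fl ru.
Proof. reflexivity. Qed.

Section W.
Variables (x y : V) (E : list (V * V)) (w : list V).
Hypothesis (Hx : farey_vertex x) (Hy : farey_vertex y) (HR : ladder_rungs x y E)
  (HP : ladder_pivots E w).

Notation M := (length E).
Notation Ek k := (nth k E e0).
Notation W k := (nth k w v0).

Fixpoint mk (s : nat) (ru : list (nat * V)) : list (nat * V * V) :=
  match ru with
  | [] => []
  | (k, z) :: ru' => (k, z, other (Ek s) z) :: mk (s + k) ru'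
  end.

Lemma M_pos : (1 <= M)%nat.
Proof. destruct HR as [H _]. destruct E; [congruence|simpl; lia]. Qed.

Lemma len_w : length w = S M.
Proof. destruct HP as [H _]; auto. Qed.

Lemma I1 k : (k < M)%nat -> endpoint (W k) (Ek k) /\ endpoint (W (S k)) (Ek k).
Proof.
  intros hk. destruct HP as [HL [Hmid [H01 [H0 Hlast]]]].
  rewrite HL in *.
  assert (A : endpoint (W k) (Ek k)).
  { destruct k as [|k]; auto. destruct (Hmid (S k)) as [_ h]; try lia. auto. }
  split; auto.
  destruct (Nat.eq_dec (S k) M) as [e|e].
  - replace (S M - 1)%nat with M in Hlast by lia. replace (S M - 2)%nat with (M - 1)%nat in Hlast by lia.
    rewrite e, Hlast. replace (M - 1)%nat with k by lia. auto.
  - destruct (Hmid (S k)) as [h _]; try lia. simpl in h. rewrite Nat.sub_0_r in h. auto.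
Qed.

Lemma W01 : W 0 = W 1.
Proof. destruct HP as [_ [_ [H _]]]; auto. Qed.

Lemma WM : W M = W (M - 1).
Proof.
  destruct HP as [HL [_ [_ [_ H]]]]. rewrite HL in H.
  replace (S M - 1)%nat with M in H by lia. replace (S M - 2)%nat with (M - 1)%nat in H by lia. auto.
Qed.

Lemma shared k z : (S k < M)%nat -> endpoint z (Ek k) -> endpoint z (Ek (S k)) -> z = W (S k).
Proof.
  intros hk H1 H2. destruct (Veq_dec z (W (S k))) as [e|ne]; auto. exfalso.
  apply (proj1 (ord x y E HR k (S k) ltac:(lia))).
  apply (same_edge_of z (W (S k))); auto.
  - apply (I1 k); lia.
  - apply (I1 (S k)); lia.
Qed.

Lemma C' i j z : (i < j < M)%nat -> endpoint z (Ek i) -> endpoint z (Ek j) ->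
  z = W (S i) /\ z = W j.
Proof.
  intros h Hi Hj. split.
  - destruct (Nat.eq_dec (S i) j) as [e|e].
    + subst j. apply shared; auto; lia.
    + apply shared; try lia; auto. apply (contig x y E HR i (S i) j); auto; lia.
  - destruct (Nat.eq_dec (S i) j) as [e|e].
    + subst j. apply shared; auto; lia.
    + replace j with (S (j - 1)) by lia. apply shared; try lia.
      * apply (contig x y E HR i (j-1) j); auto; lia.
      * replace (S (j-1)) with j by lia; auto.
Qed.

Lemma W_ep k : (k <= M)%nat -> exists k', (k' < M)%nat /\ endpoint (W k) (Ek k').
Proof.
  intros hk. pose proof M_pos. destruct (Nat.eq_dec k M) as [e|e].
  - exists (M - 1)%nat. split; [lia|]. subst k. rewrite WM. apply I1; lia.
  - exists k. split; [lia|]. apply I1; lia.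
Qed.

Lemma W_fv k : (k <= M)%nat -> farey_vertex (W k).
Proof. intros hk. destruct (W_ep k hk) as [k' [h1 h2]]. apply (ep_fv x y E HR k'); auto. Qed.

Lemma trans_adj k : (k < M)%nat -> W k <> W (S k) -> farey_adj (W k) (W (S k)).
Proof. intros hk hne. apply (adj_nth x y E HR k); auto; apply I1; auto. Qed.

Lemma jumpW k : (1 <= k)%nat -> (k < M)%nat -> W (k-1) <> W k -> W k <> W (S k) ->
  farey_adj (W (k-1)) (W (S k)).
Proof.
  intros h1 h2 n1 n2. apply (jump_adj x y E HR k (W (k-1)) (W k) (W (S k))); auto.
  - apply I1; lia.
  - replace k with (S (k-1)) at 1 by lia. apply I1; lia.
  - apply I1; lia.
  - apply I1; lia.
Qed.

Lemma x_adj : farey_adj x (W 0).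
Proof. apply (first_adj x y E Hx HR); [apply M_pos|]. apply I1; pose proof M_pos; lia. Qed.

Lemma y_adj : farey_adj (W M) y.
Proof.
  apply adj_sym. apply (last_adj x y E Hy HR); [apply M_pos|]. rewrite WM. apply I1; pose proof M_pos; lia.
Qed.

Lemma not_ep_x k : (k < M)%nat -> ~ endpoint x (Ek k).
Proof.
  intros hk [h|h]; destruct (rung_nth x y E HR k hk) as [_ [_ [_ Hs]]];
  unfold separates in Hs; rewrite <- h in Hs; rewrite fdet_self in Hs; lia.
Qed.

Lemma not_ep_y k : (k < M)%nat -> ~ endpoint y (Ek k).
Proof.
  intros hk [h|h]; destruct (rung_nth x y E HR k hk) as [_ [_ [_ Hs]]];
  unfold separates in Hs; rewrite <- h in Hs; rewrite fdet_self in Hs; lia.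
Qed.

Lemma x_ne_y : x <> y.
Proof.
  intros h. pose proof M_pos. destruct (rung_nth x y E HR 0 ltac:(lia)) as [_ [_ [_ Hs]]].
  subst y. unfold separates in Hs. nia.
Qed.

Lemma W_run s k z ru j : skipn s w = fl ((k,z)::ru) -> (j < k)%nat -> W (s + j) = z.
Proof.
  intros H hj. rewrite <- nth_skipn, H, fl_cons, app_nth1 by (rewrite repeat_length; auto).
  apply nth_repeat_lt; auto.
Qed.

Lemma skip_next s k z ru : skipn s w = fl ((k,z)::ru) -> skipn (s + k) w = fl ru.
Proof.
  intros H. rewrite Nat.add_comm, <- skipn_skipn, H, fl_cons, skipn_app, repeat_length.
  rewrite Nat.sub_diag. simpl. rewrite skipn_all2; [reflexivity|rewrite repeat_length; lia].
Qed.

Lemma len_next s k z ru : length w = (s + length (fl ((k,z)::ru)))%nat ->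
  length w = (s + k + length (fl ru))%nat.
Proof. rewrite fl_cons, length_app, repeat_length. lia. Qed.

Definition Pos (ru : list (nat * V)) := Forall (fun kv => (1 <= fst kv)%nat) ru.

Lemma run_G : forall ru s p,
  skipn s w = fl ru -> length w = (s + length (fl ru))%nat -> Pos ru ->
  consec_distinct (map snd ru) ->
  (s = 0%nat -> p = x /\ match ru with (k,_)::_ => (2 <= k)%nat | [] => False end) ->
  ((1 <= s)%nat -> p = W (s-1) /\ match ru with (_,z)::_ => p <> z | [] => True end) ->
  Gadj y p (mk s ru).
Proof.
  pose proof M_pos as HM. pose proof len_w as Hlw.
  induction ru as [|[k z] ru IH]; intros s p Hsk Hl Hpos Hcd H0 H1.
  - simpl in Hl. simpl. destruct s as [|s]; [destruct (H0 eq_refl); contradiction|].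
    destruct (H1 ltac:(lia)) as [-> _]. replace (S s - 1)%nat with M by lia. apply y_adj.
  - inversion Hpos as [|? ? Hk Hpos']; subst. simpl in Hk.
    assert (Hz : forall j, (j < k)%nat -> W (s + j) = z) by (intros; eapply W_run; eauto).
    pose proof (len_next _ _ _ _ Hl) as Hl'.
    assert (Hs1 : (s + k <= S M)%nat) by lia.
    simpl. split; [|split].
    + destruct s as [|s].
      * destruct (H0 eq_refl) as [-> _]. rewrite <- (Hz 0%nat); [apply x_adj|lia].
      * destruct (H1 ltac:(lia)) as [-> hne]. replace (S s - 1)%nat with s in * by lia.
        rewrite <- (Hz 0%nat) in * by lia. replace (S s + 0)%nat with (S s) by lia.
        apply trans_adj; [lia|rewrite Nat.add_0_r in hne; auto].
    + intros Hk1. unfold pa in Hk1; simpl in Hk1. subst k.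
      destruct s as [|s]; [destruct (H0 eq_refl) as [_ h]; lia|].
      destruct (H1 ltac:(lia)) as [-> hne]. replace (S s - 1)%nat with s in * by lia.
      destruct ru as [|[k2 z2] ru'].
      * simpl in Hl'. assert (S s = M) by lia. apply hne. rewrite <- (Hz 0%nat) by lia.
        rewrite Nat.add_0_r, H, WM. f_equal; lia.
      * simpl. inversion Hpos' as [|? ? Hk2 _]; subst. simpl in Hk2.
        pose proof (skip_next _ _ _ _ Hsk) as Hsk'.
        assert (Hz2 : W (S s + 1) = z2) by (rewrite <- (Nat.add_0_r (S s + 1)); eapply W_run; eauto).
        simpl in Hl'. rewrite fl_cons, length_app, repeat_length in Hl'.
        simpl in Hcd. destruct Hcd as [hzz _].
        unfold pv; simpl.
        assert (HzS : W (S s) = z) by (rewrite <- (Nat.add_0_r (S s)); apply Hz; lia).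
        replace (W s) with (W (S s - 1)) by (f_equal; lia).
        replace z2 with (W (S (S s))) by (rewrite <- Hz2; f_equal; lia).
        apply jumpW; try lia.
        -- replace (S s - 1)%nat with s by lia. rewrite HzS. auto.
        -- rewrite HzS. replace (S (S s)) with (S s + 1)%nat by lia. rewrite Hz2. auto.
    + apply IH.
      * eapply skip_next; eauto.
      * auto.
      * auto.
      * simpl in Hcd. destruct ru as [|[k2 z2] ru']; simpl; auto. destruct Hcd; auto.
      * intros; lia.
      * intros _. split.
        -- unfold pv; simpl. rewrite <- (Hz (k-1)%nat) by lia. f_equal. lia.
        -- destruct ru as [|[k2 z2] ru']; auto. simpl in Hcd. destruct Hcd as [h _]. unfold pv; simpl; auto.
Qed.

Lemma map_pa_mk : forall ru s, map pa (mk s ru) = map fst ru.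
Proof. induction ru as [|[k z] ru IH]; intros s; simpl; auto. rewrite IH; auto. Qed.

Lemma map_pv_mk : forall ru s, map pv (mk s ru) = map snd ru.
Proof. induction ru as [|[k z] ru IH]; intros s; simpl; auto. rewrite IH; auto. Qed.

Lemma keys_mk_cons s k z ru : keys (mk s ((k,z)::ru)) =
  (if Nat.eqb k 1 then [z] else [z; other (Ek s) z]) ++ keys (mk (s + k) ru).
Proof. reflexivity. Qed.

Definition Q (s : nat) (t : V) := exists k, (s - 1 <= k)%nat /\ (k < M)%nat /\ endpoint t (Ek k) /\
  (k = (s - 1)%nat -> t = W s).

Lemma nodup_app_intro {A} (l1 l2 : list A) : NoDup l1 -> NoDup l2 ->
  (forall t, In t l1 -> In t l2 -> False) -> NoDup (l1 ++ l2).
Proof.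
  induction l1 as [|u l1 IH]; simpl; intros H1 H2 H3; auto.
  inversion H1; subst. constructor.
  - intro h. apply in_app_or in h. destruct h as [h|h]; [contradiction|]. apply (H3 u); auto.
  - apply IH; auto. intros t h h'. apply (H3 t); auto.
Qed.

Lemma run_keys : forall ru s,
  skipn s w = fl ru -> length w = (s + length (fl ru))%nat -> Pos ru ->
  consec_distinct (map snd ru) ->
  NoDup (keys (mk s ru)) /\ ((1 <= s)%nat -> Forall (Q s) (keys (mk s ru))).
Proof.
  pose proof M_pos as HM. pose proof len_w as Hlw.
  induction ru as [|[k z] ru IH]; intros s Hsk Hl Hpos Hcd.
  - simpl. split; [constructor|intros; constructor].
  - inversion Hpos as [|? ? Hk Hpos']; subst. simpl in Hk.
    assert (Hz : forall j, (j < k)%nat -> W (s + j) = z) by (intros; eapply W_run; eauto).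
    pose proof (len_next _ _ _ _ Hl) as Hl'.
    pose proof (skip_next _ _ _ _ Hsk) as Hsk'.
    assert (Hcd' : consec_distinct (map snd ru))
      by (simpl in Hcd; destruct ru as [|[k2 z2] ru']; simpl; auto; destruct Hcd; auto).
    destruct (IH (s + k)%nat Hsk' Hl' Hpos' Hcd') as [ND QT].
    specialize (QT ltac:(lia)).
    assert (HzS : W s = z) by (rewrite <- (Nat.add_0_r s); apply Hz; lia).
    assert (Hsm : k <> 1%nat -> (s < M)%nat) by (rewrite Hlw in Hl'; lia).
    assert (Hun : k <> 1%nat -> other (Ek s) z <> z).
    { intros hk1. assert (Hze : endpoint z (Ek s)) by (rewrite <- HzS; apply I1; auto).
      apply other_neq; auto; apply (fst_snd_neq x y E HR); auto. }
    rewrite keys_mk_cons. split.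
    + apply nodup_app_intro; auto.
      * destruct (Nat.eqb k 1) eqn:e.
        -- repeat constructor; simpl; tauto.
        -- apply Nat.eqb_neq in e. constructor; [intros [h|[]]; apply (Hun e); auto|].
           repeat constructor; simpl; tauto.
      * intros t Ht HtT. rewrite Forall_forall in QT. destruct (QT t HtT) as [k'' [h1 [h2 [h3 h4]]]].
        destruct ru as [|[k2 z2] ru']; [simpl in HtT; contradiction|].
        assert (Hz2 : W (s + k) = z2) by (rewrite <- (Nat.add_0_r (s+k)); eapply W_run; eauto;
          inversion Hpos'; subst; simpl in *; lia).
        simpl in Hcd. destruct Hcd as [hzz _].
        assert (Ht' : t = z \/ (k <> 1%nat /\ t = other (Ek s) z)).
        { destruct (Nat.eqb k 1) eqn:e; simpl in Ht.
          - destruct Ht as [h|[]]; auto.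
          - apply Nat.eqb_neq in e. destruct Ht as [h|[h|[]]]; auto. }
        destruct Ht' as [->|[hk1 ->]].
        -- assert (Hzk : z = W (s + k - 1)) by (rewrite <- (Hz (k-1)%nat) by lia; f_equal; lia).
           assert (Ez : endpoint z (Ek (s + k - 1))) by (rewrite Hzk at 1; apply I1; lia).
           destruct (Nat.eq_dec k'' (s + k - 1)) as [e|e].
           ++ apply hzz. rewrite (h4 ltac:(lia)). rewrite <- Hz2. f_equal; lia.
           ++ destruct (C' (s + k - 1) k'' z ltac:(lia) Ez h3) as [hh _].
              apply hzz. rewrite hh, <- Hz2. f_equal; lia.
        -- destruct (C' s k'' (other (Ek s) z) ltac:(lia) (other_ep _ _) h3) as [hh _].
           apply (Hun hk1). rewrite hh. rewrite <- (Hz 1%nat) by lia. f_equal; lia.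
    + intros hs. apply Forall_app. split.
      * assert (Qz : Q s z).
        { exists (s - 1)%nat. repeat split; try lia.
          - rewrite <- HzS. replace s with (S (s - 1)) at 1 by lia. apply I1; lia.
          - intros _; auto. }
        destruct (Nat.eqb k 1) eqn:e.
        -- constructor; auto.
        -- apply Nat.eqb_neq in e. constructor; auto. constructor; auto.
           exists s. split; [lia|split; [apply Hsm; auto|split; [apply other_ep| intros; lia]]].
      * eapply Forall_impl; [|exact QT]. intros t [k'' [h1 [h2 [h3 h4]]]].
        exists k''. repeat split; auto; lia.
Qed.

Lemma run_keys_ep : forall ru s,
  skipn s w = fl ru -> length w = (s + length (fl ru))%nat -> Pos ru ->
  Forall (fun t => exists k, (k < M)%nat /\ endpoint t (Ek k)) (keys (mk s ru)).
Proof.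
  pose proof M_pos as HM. pose proof len_w as Hlw.
  induction ru as [|[k z] ru IH]; intros s Hsk Hl Hpos.
  - constructor.
  - inversion Hpos as [|? ? Hk Hpos']; subst. simpl in Hk.
    pose proof (len_next _ _ _ _ Hl) as Hl'.
    pose proof (skip_next _ _ _ _ Hsk) as Hsk'.
    assert (HzS : W s = z) by (rewrite <- (Nat.add_0_r s); eapply W_run; eauto; lia).
    rewrite keys_mk_cons. apply Forall_app. split; [|apply IH; auto].
    assert (Hz : exists k0, (k0 < M)%nat /\ endpoint z (Ek k0)) by (rewrite <- HzS; apply W_ep; lia).
    destruct (Nat.eqb k 1) eqn:e; constructor; auto.
    apply Nat.eqb_neq in e. constructor; auto.
    exists s. split; [rewrite Hlw in Hl'; lia| apply other_ep].
Qed.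

Lemma run_fv : forall ru s,
  skipn s w = fl ru -> length w = (s + length (fl ru))%nat -> Pos ru ->
  Forall farey_vertex (map snd ru).
Proof.
  pose proof M_pos as HM. pose proof len_w as Hlw.
  induction ru as [|[k z] ru IH]; intros s Hsk Hl Hpos.
  - constructor.
  - inversion Hpos as [|? ? Hk Hpos']; subst. simpl in Hk.
    pose proof (len_next _ _ _ _ Hl) as Hl'.
    pose proof (skip_next _ _ _ _ Hsk) as Hsk'.
    assert (HzS : W s = z) by (rewrite <- (Nat.add_0_r s); eapply W_run; eauto; lia).
    simpl. constructor; [rewrite <- HzS; apply W_fv; lia|]. eapply IH; eauto.
Qed.

Lemma run_hits (P : list V) : (forall k, (k < M)%nat -> exists t, In t P /\ endpoint t (Ek k)) ->
  forall ru s,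
  skipn s w = fl ru -> length w = (s + length (fl ru))%nat -> Pos ru ->
  consec_distinct (map snd ru) -> Hits P (mk s ru).
Proof.
  intros HPh. pose proof M_pos as HM. pose proof len_w as Hlw.
  induction ru as [|[k z] ru IH]; intros s Hsk Hl Hpos Hcd.
  - simpl; auto.
  - inversion Hpos as [|? ? Hk Hpos']; subst. simpl in Hk.
    assert (Hz : forall j, (j < k)%nat -> W (s + j) = z) by (intros; eapply W_run; eauto).
    pose proof (len_next _ _ _ _ Hl) as Hl'.
    pose proof (skip_next _ _ _ _ Hsk) as Hsk'.
    assert (HzS : W s = z) by (rewrite <- (Nat.add_0_r s); apply Hz; lia).
    simpl. split; [|split].
    + unfold pa, pv, pu; simpl. intros hk1.
      assert (Hsm : (s < M)%nat) by (rewrite Hlw in Hl'; lia).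
      destruct (HPh s Hsm) as [t [Ht Hte]].
      assert (Hze : endpoint z (Ek s)) by (rewrite <- HzS; apply I1; auto).
      destruct (other_cases _ _ _ Hze Hte) as [<-| ->]; auto.
    + destruct ru as [|[k2 z2] ru']; auto.
      unfold pv; simpl. simpl in Hcd. destruct Hcd as [hzz _].
      pose proof (Forall_inv Hpos') as Hk2. simpl in Hk2.
      assert (Hz2 : W (s + k) = z2) by (rewrite <- (Nat.add_0_r (s+k)); eapply W_run; eauto; lia).
      assert (hi : (s + k - 1 < M)%nat) by (rewrite fl_cons, length_app, repeat_length in Hl'; lia).
      destruct (HPh _ hi) as [t [Ht Hte]].
      assert (E1 : endpoint z (Ek (s + k - 1))).
      { rewrite <- (Hz (k - 1)%nat) by lia. replace (s + (k-1))%nat with (s + k - 1)%nat by lia. apply I1; lia. }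
      assert (E2 : endpoint z2 (Ek (s + k - 1))).
      { rewrite <- Hz2. replace (nth (s + k) w v0) with (nth (S (s + k - 1)) w v0) by (f_equal; lia).
        apply I1; lia. }
      destruct (ep_cases t z z2 _ Hte E1 E2 hzz) as [<-| <-]; auto.
    + apply IH; auto.
      simpl in Hcd. destruct ru as [|[k2 z2] ru']; simpl; auto. destruct Hcd; auto.
Qed.

End W.

Lemma map_fst_combine {A B} (a : list A) (b : list B) : length a = length b -> map fst (combine a b) = a.
Proof. revert b; induction a as [|u a IH]; intros [|t b] h; simpl in *; try lia; auto. rewrite IH; auto. Qed.

Lemma map_snd_combine {A B} (a : list A) (b : list B) : length a = length b -> map snd (combine a b) = b.
Proof. revert b; induction a as [|u a IH]; intros [|t b] h; simpl in *; try lia; auto. rewrite IH; auto. Qed.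

Lemma pos_combine (a : list nat) (b : list V) : Forall (fun k => (1 <= k)%nat) a -> Pos (combine a b).
Proof.
  unfold Pos. revert b; induction a as [|u a IH]; intros [|t b] h; simpl; try constructor.
  - inversion h; auto.
  - inversion h; auto.
Qed.

Lemma first_ge2 x y E w : farey_vertex x -> farey_vertex y -> ladder_rungs x y E -> ladder_pivots E w ->
  forall ru, w = fl ru -> Pos ru -> consec_distinct (map snd ru) ->
  match ru with (k,_)::_ => (2 <= k)%nat | [] => False end.
Proof.
  intros Hx Hy HR HP ru Hw Hpos Hcd.
  pose proof (len_w E w HP) as Hl. pose proof (M_pos x y E w HR HP) as HM.
  destruct ru as [|[k z] ru].
  - subst w. simpl in Hl. lia.
  - inversion Hpos as [|? ? Hk Hpos']; subst. simpl in Hk.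
    destruct (Nat.eq_dec k 1) as [e|e]; [|lia]. subst k. exfalso.
    assert (Hs0 : skipn 0 (fl ((1%nat,z)::ru)) = fl ((1%nat, z) :: ru)) by reflexivity.
    assert (W0 : nth 0 (fl ((1%nat, z) :: ru)) v0 = z) by (apply (W_run _ 0 1 z ru 0 Hs0); lia).
    pose proof (skip_next _ _ _ _ _ Hs0) as Hs1.
    destruct ru as [|[k2 z2] ru'].
    + simpl in Hl. lia.
    + pose proof (Forall_inv Hpos') as Hk2. simpl in Hk2.
      assert (W1 : nth 1 (fl ((1%nat, z) :: (k2, z2) :: ru')) v0 = z2)
        by (apply (W_run _ 1 k2 z2 ru' 0 Hs1); lia).
      simpl in Hcd. destruct Hcd as [hzz _]. apply hzz.
      rewrite <- W0, <- W1. apply (W01 E _ HP).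
Qed.

Theorem mainTheorem5 (x y : V) (a : list nat) (v : list V) :
  farey_vertex x -> farey_vertex y ->
  ~ farey_dist_le x y 1 ->
  ladder_type x y a v ->
  farey_geodesic x y (efficient_path x y a v).
Proof.
  intros Hx Hy _ [E [w [HR [HP [Hla [Hpos [Hcd Hw]]]]]]].
  set (ru := combine a v).
  assert (Hw' : w = fl ru) by (rewrite Hw; reflexivity).
  assert (Hpr : Pos ru) by (apply pos_combine; auto).
  assert (Hma : map fst ru = a) by (apply map_fst_combine; auto).
  assert (Hmv : map snd ru = v) by (apply map_snd_combine; auto).
  assert (Hcd' : consec_distinct (map snd ru)) by (rewrite Hmv; auto).
  assert (Hs0 : skipn 0 w = fl ru) by (simpl; auto).
  assert (Hl0 : length w = (0 + length (fl ru))%nat) by (rewrite Hw'; reflexivity).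
  set (rs := mk E 0 ru).
  assert (Heff : efficient_path x y a v = x :: effr y rs).
  { unfold efficient_path, effr, rs. rewrite map_pa_mk, map_pv_mk, Hma, Hmv. reflexivity. }
  rewrite Heff.
  pose proof (M_pos x y E w HR HP) as HM.
  assert (Hhits : forall q, farey_path x y q ->
     forall k, (k < length E)%nat -> exists t, In t q /\ endpoint t (nth k E e0)).
  { intros q Hq k hk. destruct (rung_nth x y E HR k hk) as [Ha [Hb [Hab Hs]]].
    destruct (path_hits x y q _ _ Hq Ha Hb Hab Hs) as [t [Ht [h|h]]]; exists t; split; auto;
    [left|right]; auto. }
  split.
  - destruct (effr_shape y rs) as [l [Hl Hi]].
    split; [discriminate|]. split; [reflexivity|]. split.
    + rewrite Hl, app_comm_cons, last_last. reflexivity.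
    + split.
      * rewrite Hl. constructor; auto. apply Forall_app. split; [|constructor; auto].
        apply Forall_forall. intros t ht. apply Hi in ht. unfold rs in ht.
        rewrite map_pv_mk in ht.
        pose proof (run_fv x y E w HR HP ru 0 Hs0 Hl0 Hpr) as F.
        rewrite Forall_forall in F. auto.
      * apply effr_chain. apply (run_G x y E w Hx Hy HR HP ru 0 x Hs0 Hl0 Hpr Hcd').
        -- intros _. split; auto. apply (first_ge2 x y E w Hx Hy HR HP ru Hw' Hpr Hcd').
        -- intros h; lia.
  - intros q Hq.
    assert (HH : Hits q rs) by (apply (run_hits x y E w HR HP q (Hhits q Hq) ru 0); auto).
    destruct (run_keys x y E w HR HP ru 0 Hs0 Hl0 Hpr Hcd') as [ND _].
    destruct (hits_count y q rs ND HH) as [W' [HW1 [HW2 [HW3 HW4]]]].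
    pose proof (run_keys_ep x y E w HR HP ru 0 Hs0 Hl0 Hpr) as Kep. fold rs in Kep.
    rewrite Forall_forall in Kep.
    assert (HxW : ~ In x W').
    { intro h. apply HW3 in h. destruct (Kep x h) as [k [hk he]].
      apply (not_ep_x x y E HR k hk he). }
    assert (HyW : ~ In y W').
    { intro h. apply HW3 in h. destruct (Kep y h) as [k [hk he]].
      apply (not_ep_y x y E HR k hk he). }
    assert (Hxy := x_ne_y x y E w Hy HR HP).
    assert (ND2 : NoDup (x :: y :: W')).
    { constructor; [intros [h|h]; auto|constructor; auto]. }
    destruct Hq as [Hne [Hhd [Hlast [Hfv Hch]]]].
    assert (Inc : incl (x :: y :: W') q).
    { intros t [<-|[<-|ht]]; auto.
      - destruct q as [|u q']; [congruence|]. simpl in Hhd. left; auto.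
      - rewrite <- Hlast. apply in_last; auto. }
    pose proof (NoDup_incl_length ND2 Inc) as Hlen. simpl in Hlen.
    unfold path_length. simpl. lia.
Qed.
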